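(* Assume there exist $\psi\in\mathcal B_{b,\gg}(\chi)$, $t_0>0$, $a>0$ and a submarkovian kernel $\tilde P$ with $\psi(x)\Lambda(dx)P_{t_0}(x,dy)=a\psi(y)\Lambda(dy)\tilde P(y,dx)$ as measures on $\chi\times\chi$. Let $\pi$ be a QSD of $(X_t)_{0\le t<\tau_\partial}$ with $\pi\ll\Lambda$, and suppose $(P_t)_{t\ge0}$ has a non-negative $L^1(\pi)$-right eigenfunction $\phi$ (i.e. $P_t\phi=\lambda(\pi)^t\phi$ $\pi$-a.e. for all $t$) with $\pi(\phi)=1$. Suppose further that $$\Big\|\frac{d\mathcal L_\mu(X_t\mid\tau_\partial>t)}{d\pi}-1\Big\|_{L^\infty(\pi)}\to0\ \ (t\to\infty)\quad\text{whenever }\mu\in\mathcal P_\infty(\pi)\text{ and }\mu(\phi)>0.$$ Then $\pi\in\mathcal P_\infty(\Lambda)$, i.e. $\pi$ has an essentially bounded density with respect to $\Lambda$.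
   Context: $\chi$ is a metric space with Borel $\sigma$-algebra and a distinguished $\sigma$-finite Borel measure $\Lambda$ of full support. $(X_t)_{0\le t<\tau_\partial}$ is a killed Markov process on $\chi$ with absorption time $\tau_\partial$ and submarkovian semigroup $P_t(x,A)=\mathbb P_x(X_t\in A,\tau_\partial>t)$, acting on $L^1(\pi)$ by $P_tf(x)=\mathbb E_x[f(X_t)\mathbb 1(\tau_\partial>t)]$. A QSD is $\pi\in\mathcal P(\chi)$ with $\mathbb P_\pi(X_t\in\cdot\mid\tau_\partial>t)=\pi$ for all $t$; $\lambda(\pi)=\mathbb P_\pi(\tau_\partial>1)$. $\mathcal P_\infty(m)$ = probability measures $\ll m$ with density in $L^\infty(m)$. $\mathcal B_{b,\gg}(\chi)$ = bounded Borel functions with positive infimum. *)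

(* Defs.v *)
From HB Require Import structures.
From mathcomp Require Import all_boot all_order all_algebra.
From mathcomp Require Import all_classical all_reals all_analysis.
Set Implicit Arguments. Unset Strict Implicit. Unset Printing Implicit Defensive.
Import Order.TTheory GRing.Theory Num.Theory.
Import numFieldNormedType.Exports.
Local Open Scope classical_set_scope.
Local Open Scope ring_scope.

Definition pointed_at (M : choiceType) (x0 : M) : Type := M.
Section pointed_at.
Variables (M : choiceType) (x0 : M).
HB.instance Definition _ := Choice.on (pointed_at x0).
HB.instance Definition _ := isPointed.Build (pointed_at x0) x0.
End pointed_at.

Definition borel_space (R : realType) (M : metricType R) (x0 : M) :=
  g_sigma_algebraType (@open M : set (set (@pointed_at M x0))).

(* The state space chi: a metric space M (assumed nonempty, witnessed by x0,
   which is only used to equip the carrier with a point) endowed with its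
   Borel sigma-algebra (generated by the open sets of M). *)

Local Open Scope ereal_scope.

Section defs.
Variables (d : measure_display) (T : measurableType d) (R : realType).

Definition in_Pinfty (m : {measure set T -> \bar R}) (mu : set T -> \bar R) :=
  exists g : T -> R,
    [/\ measurable_fun setT g, (forall x, (0 <= g x)%R),
        (exists C : R, {ae m, forall x, (g x <= C)%R}) &
        (forall A, measurable A -> mu A = \int[m]_(x in A) (g x)%:E)].

(* Submarkovian semigroup (P_t)_{t >= 0} of a killed Markov process,
   P t x A = P_x(X_t \in A, tau_partial > t). *)
Definition submarkov_semigroup (P : R -> R.-spker T ~> T) :=
  (forall x A, measurable A -> P 0%R x A = \d_x A) /\
  (forall s t, (0 <= s)%R -> (0 <= t)%R -> forall x A, measurable A ->
     P (s + t)%R x A = \int[P s x]_y P t y A).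

Definition law_killed (P : R -> R.-spker T ~> T) (mu : set T -> \bar R)
  (t : R) (A : set T) : \bar R := \int[mu]_x P t x A.

Definition is_QSD (P : R -> R.-spker T ~> T) (pi : probability T R) :=
  forall t, (0 <= t)%R ->
    0 < law_killed P pi t setT /\
    forall A, measurable A ->
      law_killed P pi t A = law_killed P pi t setT * pi A.

Definition qsd_lambda (P : R -> R.-spker T ~> T) (pi : probability T R) : R :=
  fine (law_killed P pi 1%R setT).

End defs.

(* Main.v *)
Require Import Defs.
From HB Require Import structures.
From mathcomp Require Import all_boot all_order all_algebra.
From mathcomp Require Import all_classical all_reals all_analysis.
From mathcomp Require Import measurable_realfun.
From mathcomp Require Import lra.
Import Order.TTheory GRing.Theory Num.Theory.
Import numFieldNormedType.Exports.
Local Open Scope classical_set_scope.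
Local Open Scope ring_scope.


Section Phi.
Local Open Scope ereal_scope.
Context d (T : measurableType d) (R : realType).
Import HBNNSimple.

Definition Phi (m : {measure set T -> \bar R}) (h : T -> R) (k : R.-ker T ~> T)
  (f : T -> \bar R) := \int[m]_x ((h x)%:E * \int[k x]_y f y).

Section fixed.
Variables (m : {measure set T -> \bar R}) (h : T -> R) (k : R.-ker T ~> T).
Hypothesis h0 : forall x, (0 <= h x)%R.
Hypothesis mh : measurable_fun setT h.

Lemma Phi_nnsfun (s : {nnsfun T >-> R}) :
  Phi m h k (EFin \o s) = \sum_(r \in range s)
     r%:E * Phi m h k (fun y => (\1_(s @^-1` [set r]) y)%:E).
Proof.
rewrite /Phi.
have t0 x r : 0 <= r%:E * k x (s @^-1` [set r]).
  by apply: (mulemu_ge0 (fun r => s @^-1` [set r])) => r0; rewrite preimage_nnfun0.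
have inner x : \int[k x]_y (EFin \o s) y
    = \sum_(r \in range s) r%:E * k x (s @^-1` [set r]).
  by rewrite integralT_nnsfun sintegralE.
under eq_integral do rewrite inner ge0_mule_fsumr//.
rewrite ge0_integral_fsum//; last 2 first.
- move=> r; apply: emeasurable_funM; first exact/measurable_EFinP.
  apply: measurable_funeM; exact: measurable_kernel.
- by move=> r x _; rewrite mule_ge0// lee_fin.
apply: eq_fsbigr => r /[!inE] -[x0 _ <-].
under eq_integral do rewrite muleCA.
rewrite ge0_integralZl//; last 2 first.
- by move=> x _; rewrite mule_ge0// lee_fin.
- by rewrite lee_fin.
congr (_ * _); apply: eq_integral => x _.
by rewrite integral_indic// setIT.
apply: emeasurable_funM; first exact/measurable_EFinP.
exact: measurable_kernel.
Qed.

Lemma Phi_lim (f : T -> \bar R) (f0 : forall x, 0 <= f x)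
  (mf : measurable_fun setT f) :
  Phi m h k f = limn (fun n => Phi m h k (EFin \o nnsfun_approx measurableT mf n)).
Proof.
pose f_ := nnsfun_approx measurableT mf.
pose G n x := \int[k x]_y (EFin \o f_ n) y.
have ndG x : nondecreasing_seq (G ^~ x).
  move=> a b ab; apply: ge0_le_integral => //.
  + by move=> z _; rewrite lee_fin.
  + exact/measurable_EFinP.
  + exact/measurable_EFinP.
  + by move=> z _; rewrite lee_fin; exact/lefP/nd_nnsfun_approx.
have inner x : \int[k x]_y f y = limn (G ^~ x).
  transitivity (\int[k x]_z limn (fun n => (f_ n z)%:E)).
    by apply/eq_integral => z _; apply/esym/cvg_lim => //=; exact: cvg_nnsfun_approx.
  rewrite monotone_convergence//.
  + by move=> n; exact/measurable_EFinP.
  + by move=> n z _; rewrite lee_fin.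
  + by move=> z _ a b ab; rewrite lee_fin; exact/lefP/nd_nnsfun_approx.
have outer x : (h x)%:E * \int[k x]_y f y = limn (fun n => (h x)%:E * G n x).
  rewrite inner; apply/esym/cvg_lim => //; apply: cvgeZl => //.
  exact: ereal_nondecreasing_is_cvgn.
rewrite /Phi; under eq_integral do rewrite outer.
rewrite monotone_convergence//.
- move=> n; apply: emeasurable_funM; first exact/measurable_EFinP.
  apply: measurable_fun_integral_kernel.
  + by move=> U mU; exact: measurable_kernel.
  + by move=> z; rewrite lee_fin.
  + exact/measurable_EFinP.
- by move=> n x _; rewrite mule_ge0 ?lee_fin//; apply: integral_ge0 => z _; rewrite lee_fin.
- by move=> x _ a b ab; rewrite lee_wpmul2l ?lee_fin//; exact: ndG.
Qed.

End fixed.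

Lemma Phi_le (m1 m2 : {measure set T -> \bar R}) (h1 h2 : T -> R)
  (k1 k2 : R.-ker T ~> T)
  (h10 : forall x, (0 <= h1 x)%R) (mh1 : measurable_fun setT h1)
  (h20 : forall x, (0 <= h2 x)%R) (mh2 : measurable_fun setT h2) :
  (forall B, measurable B ->
     \int[m1]_x ((h1 x)%:E * k1 x B) <= \int[m2]_x ((h2 x)%:E * k2 x B)) ->
  forall f : T -> \bar R, (forall x, 0 <= f x) -> measurable_fun setT f ->
  Phi m1 h1 k1 f <= Phi m2 h2 k2 f.
Proof.
move=> HB f f0 mf.
have Pind m h k B : measurable B ->
    Phi m h k (fun y => (\1_B y)%:E) = \int[m]_x ((h x)%:E * k x B).
  by move=> mB; apply: eq_integral => x _; rewrite integral_indic// setIT.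
have ndP (m : {measure set T -> \bar R}) (h : T -> R) (k : R.-ker T ~> T)
    (hh : forall x, (0 <= h x)%R) (mh : measurable_fun setT h) :
    nondecreasing_seq (fun n => Phi m h k (EFin \o nnsfun_approx measurableT mf n)).
  have mG n : measurable_fun setT (fun x => (h x)%:E *
     \int[k x]_y (EFin \o nnsfun_approx measurableT mf n) y).
    apply: emeasurable_funM; first exact/measurable_EFinP.
    apply: measurable_fun_integral_kernel.
    * by move=> U mU; exact: measurable_kernel.
    * by move=> z; rewrite lee_fin.
    * exact/measurable_EFinP.
  move=> a b ab; apply: ge0_le_integral; [exact: measurableT| |exact: mG|exact: mG|].
  + move=> x _; rewrite mule_ge0 ?lee_fin//; apply: integral_ge0 => z _.
    by rewrite lee_fin.
  + move=> x _; rewrite lee_wpmul2l ?lee_fin//.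
    apply: ge0_le_integral => //.
    * by move=> z _; rewrite lee_fin.
    * exact/measurable_EFinP.
    * exact/measurable_EFinP.
    * by move=> z _; rewrite lee_fin; exact/lefP/nd_nnsfun_approx.
rewrite (Phi_lim m1 h1 k1 h10 mh1 f f0 mf) (Phi_lim m2 h2 k2 h20 mh2 f f0 mf).
apply: lee_lim.
- exact/ereal_nondecreasing_is_cvgn/ndP.
- exact/ereal_nondecreasing_is_cvgn/ndP.
apply: nearW => n.
rewrite (Phi_nnsfun m1 h1 k1 h10 mh1) (Phi_nnsfun m2 h2 k2 h20 mh2).
apply: lee_fsum => // r [x _ <-].
rewrite lee_wpmul2l ?lee_fin// !Pind//.
exact: HB.
Qed.

End Phi.
Arguments Phi {d T R}.


Section rn.
Local Open Scope ereal_scope.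
Context d (T : measurableType d) (R : realType).
Variables (Lam : {measure set T -> \bar R}) (HL : sigma_finite setT Lam).

Definition LamS : set T -> \bar R := Lam.
HB.instance Definition _ := Measure.on LamS.
HB.instance Definition _ := Measure_isSigmaFinite.Build _ _ _ LamS HL.

Lemma rn_density (pi : probability T R) : pi `<< Lam ->
  exists g : T -> R, [/\ measurable_fun setT g, (forall x, (0 <= g x)%R) &
    forall A, measurable A -> pi A = \int[Lam]_(x in A) (g x)%:E].
Proof.
move=> pL.
have pL' : pi `<< (LamS : {sigma_finite_measure set T -> \bar R}) by [].
have [f [f0 ffin fint fA]] := radon_nikodym_sigma_finite pL'.
exists (fine \o f); split.
- apply: measurableT_comp => //; exact: measurable_int fint.
- by move=> x; rewrite /= fine_ge0.
- move=> A mA; rewrite fA//; apply: eq_integral => x _ /=.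
  by rewrite fineK.
Qed.
End rn.


Section kern.
Local Open Scope ereal_scope.
Context d (T : measurableType d) (R : realType).
Variable P : R -> R.-spker T ~> T.
Hypothesis HP : submarkov_semigroup P.

Lemma P0_indic x B : measurable B -> P 0%R x B = (\1_B x)%:E.
Proof. by move=> mB; rewrite HP.1// diracE indicE. Qed.

Lemma P0_int x f : measurable_fun setT f -> \int[P 0%R x]_y f y = f x.
Proof.
move=> mf; rewrite (eq_measure_integral (\d_x)); last first.
  by move=> A mA _; rewrite HP.1.
by rewrite integral_dirac// diracT mul1e.
Qed.

Lemma dom_int (m1 m2 : {measure set T -> \bar R}) (K : R) (K0 : (0 <= K)%R) :
  (forall B, measurable B -> m1 B <= K%:E * m2 B) ->
  forall f : T -> \bar R, (forall x, 0 <= f x) -> measurable_fun setT f ->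
  \int[m1]_x f x <= K%:E * \int[m2]_x f x.
Proof.
move=> HB f f0 mf.
have E (m : {measure set T -> \bar R}) (c : R) (c0 : (0 <= c)%R) g :
    (forall x, 0 <= g x) -> measurable_fun setT g ->
    \int[m]_x ((cst c x)%:E * \int[P 0%R x]_y g y) = c%:E * \int[m]_x g x.
  move=> g0 mg; under eq_integral do rewrite P0_int// /=.
  by rewrite ge0_integralZl// lee_fin.
have mI (B : set T) : measurable B -> measurable_fun setT (fun y => (\1_B y : R)%:E).
  by move=> mB; apply/measurable_EFinP; exact: measurable_indic.
have I0 (B : set T) : forall y, 0 <= (\1_B y : R)%:E by move=> y; rewrite lee_fin.
have H : Phi m1 (cst 1%R) (P 0%R) f <= Phi m2 (cst K) (P 0%R) f.
  apply: Phi_le => //.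
  - move=> B mB.
    have h2 (m : {measure set T -> \bar R}) (c : R) : (0 <= c)%R ->
        \int[m]_x ((cst c x)%:E * P 0%R x B) = c%:E * m B.
      move=> c0; under eq_integral => x _ do rewrite P0_indic// /=.
      rewrite ge0_integralZl// ?lee_fin//.
      by have := integral_indic m measurableT mB; rewrite setIT => <-.
      exact: mI.
    rewrite h2; last exact: ler01.
    by rewrite h2// mul1e; exact: HB.
move: H; rewrite /Phi E// E//.
by rewrite mul1e.
Qed.

Lemma claim (Lam : {measure set T -> \bar R}) (psi : T -> R) (c C a t0 : R)
  (Pt : R.-spker T ~> T)
  (mpsi : measurable_fun setT psi) (c0 : (0 < c)%R)
  (hpsi : forall x, (c <= psi x <= C)%R) (a0 : (0 < a)%R) (t00 : (0 <= t0)%R)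
  (Hrev : forall D : set (T * T), measurable D ->
     \int[Lam]_x ((psi x)%:E * \int[P t0 x]_y (\1_D (x, y))%:E)
      = a%:E * \int[Lam]_y ((psi y)%:E * \int[Pt y]_x (\1_D (x, y))%:E)) :
  forall k A, measurable A ->
    \int[Lam]_x P (k%:R * t0)%R x A <= ((a * C / c) ^+ k)%:E * Lam A.
Proof.
have C0 : (0 <= C)%R.
  by have /andP[h1 h2] := hpsi point; rewrite (le_trans (ltW c0)) ?(le_trans h1).
have psi0 x : (0 <= psi x)%R.
  by have /andP[h1 h2] := hpsi x; rewrite (le_trans (ltW c0)).
elim=> [|k IH] A mA.
  rewrite mul0r expr0 mul1e.
  under eq_integral do rewrite P0_indic//.
  by have := integral_indic Lam measurableT mA; rewrite setIT => <-.
set w := fun y => P (k%:R * t0)%R y A.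
have mw : measurable_fun setT w by exact: measurable_kernel.
have w0 y : 0 <= w y by [].
have sg x : P (k.+1%:R * t0)%R x A = \int[P t0 x]_y w y.
  rewrite -addn1 natrD mulrDl mul1r addrC; apply: HP.2 => //.
  by rewrite mulr_ge0.
under eq_integral do rewrite sg.
have ac0 : (0 <= a * C)%R by rewrite mulr_ge0// ltW.
have step1 : \int[Lam]_x \int[P t0 x]_y w y
    <= (c^-1)%:E * Phi Lam psi (P t0) w.
  rewrite /Phi -ge0_integralZl//; last 3 first.
  - apply: emeasurable_funM; first exact/measurable_EFinP.
    apply: measurable_fun_integral_kernel => //.
    by move=> U mU; exact: measurable_kernel.
  - by move=> x _; rewrite mule_ge0 ?lee_fin//; exact: integral_ge0.
  - by rewrite lee_fin invr_ge0 ltW.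
  apply: ge0_le_integral => //.
  - by move=> x _; exact: integral_ge0.
  - apply: measurable_fun_integral_kernel => //.
    by move=> U mU; exact: measurable_kernel.
  - apply: emeasurable_funM; first exact: measurable_cst.
    apply: emeasurable_funM; first exact/measurable_EFinP.
    apply: measurable_fun_integral_kernel => //.
    by move=> U mU; exact: measurable_kernel.
  move=> x _; rewrite muleA -EFinM -[X in X <= _]mul1e lee_wpmul2r//.
    exact: integral_ge0.
  rewrite lee_fin mulrC ler_pdivlMr// mul1r.
  by have /andP[] := hpsi x.
have step2 : Phi Lam psi (P t0) w <= Phi Lam (cst (a * C)%R) (P 0%R) w.
  apply: Phi_le => // B mB.
  have e x y : \1_(setT `*` B) (x, y) = \1_B y :> R.
    by rewrite !indicE in_setX in_setT.
  have := Hrev (setT `*` B) (measurableX measurableT mB).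
  under eq_integral => x _.
    under eq_integral => y _ do rewrite e.
    over.
  under [in X in _ = X -> _]eq_integral => y _.
    under eq_integral => x _ do rewrite e.
    rewrite (_ : \int[Pt y]_x (\1_B y)%:E = (\1_B y)%:E * Pt y setT); last first.
      exact: integral_cst.
    over.
  have L : \int[Lam]_x ((psi x)%:E * P t0 x B)
      = \int[Lam]_x ((psi x)%:E * \int[P t0 x]_y (\1_B y)%:E).
    apply: eq_integral => x _; congr (_ * _).
    by have := integral_indic (P t0 x) measurableT mB; rewrite setIT => <-.
  rewrite L => ->.
  have RR : \int[Lam]_x ((cst (a * C)%R x)%:E * P 0%R x B)
      = a%:E * \int[Lam]_x (C%:E * (\1_B x)%:E).
    under eq_integral do rewrite P0_indic// /= EFinM -muleA.
    rewrite [LHS]ge0_integralZl//.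
    - apply: emeasurable_funM; first exact: measurable_cst.
      by apply/measurable_EFinP; exact: measurable_indic.
    - by move=> x _; rewrite mule_ge0// lee_fin.
    - by rewrite lee_fin ltW.
  rewrite RR; apply: lee_wpmul2l; first by rewrite lee_fin ltW.
  apply: ge0_le_integral => //.
  - by move=> x _; rewrite !mule_ge0 ?lee_fin.
  - apply: emeasurable_funM; first exact/measurable_EFinP.
    apply: emeasurable_funM; first by apply/measurable_EFinP; exact: measurable_indic.
    exact: measurable_kernel.
  - apply: emeasurable_funM; first exact: measurable_cst.
    by apply/measurable_EFinP; exact: measurable_indic.
  move=> y _; apply: lee_pmul.
  - by rewrite lee_fin.
  - by rewrite mule_ge0 ?lee_fin.
  - by rewrite lee_fin; have /andP[] := hpsi y.
  rewrite -[X in _ <= X]mule1; apply: lee_wpmul2l; first by rewrite lee_fin.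
  exact: sprob_kernel_le1.
have step3 : Phi Lam (cst (a * C)%R) (P 0%R) w = (a * C)%:E * \int[Lam]_x w x.
  rewrite /Phi; under eq_integral do rewrite P0_int// /=.
  by rewrite ge0_integralZl// lee_fin.
apply: (le_trans step1).
apply: le_trans (lee_wpmul2l _ step2) _; first by rewrite lee_fin invr_ge0 ltW.
rewrite step3.
have -> : (c^-1)%:E * ((a * C)%:E * \int[Lam]_x w x)
    = (a * C / c)%:E * \int[Lam]_x w x.
  by rewrite muleA -EFinM mulrC.
rewrite exprS [in X in _ <= X]EFinM -muleA.
apply: lee_wpmul2l; first by rewrite lee_fin divr_ge0// ltW.
exact: IH.
Qed.

End kern.


Section stepA.
Local Open Scope ereal_scope.
Context d (T : measurableType d) (R : realType).

Lemma stepA (pi : probability T R) (g phi : T -> R) (mg : measurable_fun setT g)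
  (mphi : measurable_fun setT phi) (phi0 : forall x, (0 <= phi x)%R)
  (Hn : \int[pi]_x (phi x)%:E = 1) :
  exists n : nat, 0 < \int[pi]_x ((\1_[set x | (g x <= n%:R)%R] x)%:E * (phi x)%:E).
Proof.
set S := fun n : nat => [set x | (g x <= n%:R)%R].
have mS n : measurable (S n).
  have mb : measurable_fun setT (fun x => (g x <= n%:R)%R).
    exact: measurable_fun_ler mg (measurable_cst _).
  have := mb measurableT [set true] I.
  by rewrite setTI /S /preimage /=; congr measurable; apply/seteqP; split => x /=.
apply: contrapT => /forallNP H.
have H' n : \int[pi]_x ((\1_(S n) x)%:E * (phi x)%:E) <= 0 by rewrite leNgt; apply/negP; exact: H.
have : \int[pi]_x (phi x)%:E = limn (fun n => \int[pi]_x ((\1_(S n) x)%:E * (phi x)%:E)).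
  rewrite -monotone_convergence//.
  - apply: eq_integral => x _; apply/esym/cvg_lim => //.
    apply: cvg_near_cst.
    have g0 : (0 <= `|g x|)%R by [].
    exists (Num.bound `|g x|) => // n /= hn.
    rewrite indicE mem_set ?mul1e// /S /=.
    apply: le_trans (ler_norm _) _.
    apply: le_trans (ltW (archi_boundP g0)) _.
    by rewrite ler_nat.
  - move=> n; apply: emeasurable_funM; last exact/measurable_EFinP.
    by apply/measurable_EFinP; exact: measurable_indic.
  - by move=> n x _; rewrite mule_ge0 ?lee_fin.
  - move=> x _ a b ab; apply: lee_wpmul2r; first by rewrite lee_fin.
    rewrite lee_fin !indicE; case: (boolP (x \in S a)) => [/set_mem xa|_].
      by rewrite mem_set//= /S /=; apply: le_trans xa _; rewrite ler_nat.
    by case: (x \in S b).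
move=> E; move: Hn; rewrite E => Hn.
have : limn (fun n => \int[pi]_x ((\1_(S n) x)%:E * (phi x)%:E)) <= 0.
  apply: lime_le; last exact: nearW.
  apply: ereal_nondecreasing_is_cvgn => a b ab.
  apply: ge0_le_integral => //.
  - by move=> x _; rewrite mule_ge0 ?lee_fin.
  - apply: emeasurable_funM; last exact/measurable_EFinP.
    by apply/measurable_EFinP; exact: measurable_indic.
  - apply: emeasurable_funM; last exact/measurable_EFinP.
    by apply/measurable_EFinP; exact: measurable_indic.
  move=> x _; apply: lee_wpmul2r; first by rewrite lee_fin.
  rewrite lee_fin !indicE; case: (boolP (x \in S a)) => [/set_mem xa|_].
    by rewrite mem_set//= /S /=; apply: le_trans xa _; rewrite ler_nat.
  by case: (x \in S b).
by rewrite Hn lee_fin ler10.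
Qed.
End stepA.

Section stepB.
Local Open Scope ereal_scope.
Context d (T : measurableType d) (R : realType).
Variable P : R -> R.-spker T ~> T.
Hypothesis HP : submarkov_semigroup P.

Lemma stepB_pos (pi : probability T R) (S : set T) (mS : measurable S)
  (phi : T -> R) (mphi : measurable_fun setT phi) (phi0 : forall x, (0 <= phi x)%R)
  (Hpos : 0 < \int[pi]_x ((\1_S x)%:E * (phi x)%:E)) : 0 < pi S.
Proof.
rewrite lt0e measure_ge0 andbT; apply/eqP => S0.
move: Hpos; rewrite (ae_eq_integral (cst 0)) ?integral0 ?ltxx//.
- apply: emeasurable_funM; last exact/measurable_EFinP.
  by apply/measurable_EFinP; exact: measurable_indic.
- exists S; split => // x /= /not_implyP [_ h].
  by apply: contrapT => nS; apply: h; rewrite indicE memNset ?mul0e.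
Qed.

Section muS.
Variables (pi : probability T R) (S : set T) (mS : measurable S) (S0 : 0 < pi S).
Let z := fine (pi S).
Let piSE : pi S = z%:E.
Proof. by rewrite /z fineK// ge0_fin_numE// (le_lt_trans (probability_le1 _ _)) ?ltey. Qed.
Let z0 : (0 < z)%R. Proof. by rewrite -lte_fin -piSE. Qed.

Definition muS : probability T R := mnormalize (mrestr pi mS) pi.

Lemma muSE U : measurable U -> muS U = pi (U `&` S) * (z^-1)%:E.
Proof.
move=> mU; rewrite /muS /=; unfold mnormalize.
case: ifPn => [/orP[/eqP|/eqP]|_].
- move=> H; have : pi (setT `&` S) = 0 := H.
  by rewrite setTI piSE => -[] /eqP; rewrite gt_eqF.
- move=> H; have : pi (setT `&` S) = +oo := H.
  by rewrite setTI piSE.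
- change (pi (U `&` S) * ((fine (pi (setT `&` S)))^-1)%:E = pi (U `&` S) * (z^-1)%:E).
  by rewrite setTI.
Qed.

Lemma muS_Pinf : in_Pinfty pi muS.
Proof.
have i0 x : (0 <= \1_S x :> R)%R by rewrite indicE; case: (x \in S).
exists (fun x => \1_S x * z^-1)%R; split.
- by apply: measurable_funM => //; exact: measurable_indic.
- by move=> x; rewrite mulr_ge0// invr_ge0 ltW.
- exists (z^-1)%R; apply: aeW => x; rewrite indicE.
  by case: (x \in S); rewrite ?mul1r ?mul0r ?lexx// invr_ge0 ltW.
- move=> A mA; rewrite muSE//.
  under eq_integral do rewrite EFinM.
  rewrite ge0_integralZr//.
  + by have := integral_indic pi mA mS; rewrite setIC => ->.
  + by apply/measurable_funTS/measurable_EFinP; exact: measurable_indic.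
  + by rewrite lee_fin invr_ge0 ltW.
Qed.

Lemma muS_phi (phi : T -> R) (mphi : measurable_fun setT phi)
  (phi0 : forall x, (0 <= phi x)%R) :
  0 < \int[pi]_x ((\1_S x)%:E * (phi x)%:E) -> 0 < \int[muS]_x (phi x)%:E.
Proof.
move=> Hp.
have i0 x : (0 <= \1_S x :> R)%R by rewrite indicE; case: (x \in S).
have mI (B : set T) : measurable B -> measurable_fun setT (fun y => (\1_B y : R)%:E).
  by move=> mB; apply/measurable_EFinP; exact: measurable_indic.
have H : Phi pi (\1_S) (P 0%R) (fun x => (phi x)%:E)
      <= Phi muS (cst z) (P 0%R) (fun x => (phi x)%:E).
  apply: Phi_le => //.
  - by move=> x; exact: ltW.
  - move=> B mB.
    have -> : \int[pi]_x ((\1_S x)%:E * P 0%R x B) = pi (S `&` B).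
      have iI x : (\1_S x * \1_B x = \1_(S `&` B) x :> R)%R by rewrite indicI.
      under eq_integral do rewrite P0_indic// -EFinM iI.
      by have := integral_indic pi measurableT (measurableI _ _ mS mB); rewrite setIT => <-.
    under eq_integral do rewrite P0_indic// /=.
    rewrite ge0_integralZl//; last 2 first.
    + exact: mI.
    + by rewrite lee_fin ltW.
    have := integral_indic muS measurableT mB; rewrite setIT => ->.
    apply: (@le_trans _ _ (z%:E * (pi (B `&` S) * (z^-1)%:E))); last first.
      by rewrite -(muSE B mB).
    by rewrite muleCA -EFinM divff ?gt_eqF// mule1 setIC.
  - exact/measurable_EFinP.
have mphiE : measurable_fun setT (fun x => (phi x)%:E) by exact/measurable_EFinP.
have e1 : Phi pi (\1_S) (P 0%R) (fun x => (phi x)%:E)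
    = \int[pi]_x ((\1_S x)%:E * (phi x)%:E).
  by apply: eq_integral => x _; rewrite (@P0_int _ _ _ _ HP x _ mphiE).
have e2 : Phi muS (cst z) (P 0%R) (fun x => (phi x)%:E)
    = z%:E * \int[muS]_x (phi x)%:E.
  rewrite -ge0_integralZl//; last 2 first.
  - by move=> x _; rewrite lee_fin.
  - by rewrite lee_fin ltW.
  by apply: eq_integral => x _; rewrite (@P0_int _ _ _ _ HP x _ mphiE).
move: H; rewrite e1 e2 => H.
rewrite lt_neqAle integral_ge0 ?andbT; last by move=> x _; rewrite lee_fin.
apply/eqP => I0; move: H; rewrite -I0 mule0 => H.
by move: (lt_le_trans Hp H); rewrite ltxx.
Qed.

Lemma muS_dom (Lam : {measure set T -> \bar R}) (g : T -> R) (n : R)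
  (mg : measurable_fun setT g) (g0 : forall x, (0 <= g x)%R) (n0 : (0 <= n)%R)
  (gA : forall A, measurable A -> pi A = \int[Lam]_(x in A) (g x)%:E)
  (hS : forall x, S x -> (g x <= n)%R) :
  forall B, measurable B -> muS B <= (n / z)%:E * Lam B.
Proof.
move=> B mB; have mBS := measurableI _ _ mB mS.
rewrite muSE// (gA _ mBS).
apply: (@le_trans _ _ ((n%:E * Lam (B `&` S)) * (z^-1)%:E)).
  apply: lee_wpmul2r; first by rewrite lee_fin invr_ge0 ltW.
  rewrite -(integral_cst Lam mBS).
  apply: ge0_le_integral => //.
  - by move=> x _; rewrite lee_fin.
  - by apply/measurable_funTS/measurable_EFinP.
  - by move=> x [_ Sx]; rewrite /= lee_fin hS.
rewrite muleAC -EFinM; apply: lee_wpmul2l; first by rewrite lee_fin divr_ge0// ltW.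
by apply: le_measure; rewrite ?inE//; exact: subIsetl.
Qed.

End muS.
End stepB.

Section final.
Local Open Scope ereal_scope.
Context d (T : measurableType d) (R : realType).

Lemma final_bound (Lam : {measure set T -> \bar R}) (pi : probability T R)
  (g : T -> R) (mg : measurable_fun setT g) (g0 : forall x, (0 <= g x)%R)
  (gA : forall A, measurable A -> pi A = \int[Lam]_(x in A) (g x)%:E)
  (K : R) (K0 : (0 <= K)%R) (H : forall A, measurable A -> pi A <= K%:E * Lam A) :
  in_Pinfty Lam pi.
Proof.
exists g; split => //.
exists (K + 1)%R.
set N := [set x | (K + 1 < g x)%R].
have mN : measurable N.
  have mb : measurable_fun setT (fun x => (K + 1 < g x)%R).
    exact: measurable_fun_ltr (measurable_cst _) mg.
  have := mb measurableT [set true] I.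
  by rewrite setTI /N /preimage /=; congr measurable; apply/seteqP; split => x /=.
exists N; split => //; last first.
  by move=> x /= /negP; rewrite -ltNge.
have l0 : 0 <= Lam N by [].
have h1 : (K + 1)%:E * Lam N <= pi N.
  rewrite -(integral_cst Lam mN) gA//.
  apply: ge0_le_integral => //.
  - by move=> x _; rewrite lee_fin addr_ge0.
  - by apply/measurable_funTS/measurable_EFinP.
  - by move=> x Nx; rewrite /= lee_fin ltW.
have h2 := H N mN.
move: l0 h1 h2; case: (Lam N) => [r| |]//.
- rewrite lee_fin => r0 h1 h2.
  have := le_trans h1 h2; rewrite lee_fin mulrDl mul1r -[X in (_ <= X)%R]addr0 lerD2l.
  by move=> r0'; congr EFin; apply/eqP; rewrite eq_le r0' r0.
- move=> _ h1 _; move: (le_trans h1 (probability_le1 pi mN)).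
  by rewrite muleC gt0_mulye ?lte_fin ?ltr_wpDl// leye_eq.
Qed.

End final.


Theorem mainTheorem8 (R : realType) (M : metricType R) (x0 : M)
  (Lam : {measure set (borel_space x0) -> \bar R})
  (HLam_sfin : sigma_finite setT Lam)
  (HLam_supp : forall U : set M, open U -> U !=set0 -> (0 < Lam U)%E)
  (P : R -> R.-spker (borel_space x0) ~> (borel_space x0))
  (HP : submarkov_semigroup P)
  (psi : borel_space x0 -> R) (t0 a : R)
  (Ptilde : R.-spker (borel_space x0) ~> (borel_space x0))
  (Hpsi_meas : measurable_fun setT psi)
  (Hpsi_bd : exists c C : R, 0 < c /\ forall x, c <= psi x <= C)
  (Ht0 : 0 < t0) (Ha : 0 < a)
  (Hrev : forall C : set (borel_space x0 * borel_space x0),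
     measurable C ->
     (\int[Lam]_x ((psi x)%:E * \int[P t0 x]_y (\1_C (x, y))%:E)
      = a%:E * \int[Lam]_y ((psi y)%:E * \int[Ptilde y]_x (\1_C (x, y))%:E))%E)
  (pi : probability (borel_space x0) R)
  (Hqsd : is_QSD P pi)
  (Hpi_ac : pi `<< Lam)
  (phi : borel_space x0 -> R)
  (Hphi_meas : measurable_fun setT phi)
  (Hphi_ge0 : forall x, 0 <= phi x)
  (Hphi_int : pi.-integrable setT (fun x => (phi x)%:E))
  (Hphi_eig : forall t, 0 <= t ->
     {ae pi, forall x, (\int[P t x]_y (phi y)%:E
                       = ((qsd_lambda P pi `^ t) * phi x)%:E)%E})
  (Hphi_norm : (\int[pi]_x (phi x)%:E = 1)%E)
  (Hconv : forall mu : probability (borel_space x0) R,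
     in_Pinfty pi mu ->
     (0 < \int[mu]_x (phi x)%:E)%E ->
     forall eps : R, 0 < eps ->
     exists T0 : R, forall t, 0 <= t -> T0 <= t ->
       (0 < law_killed P mu t setT)%E /\
       exists h : borel_space x0 -> R,
         [/\ measurable_fun setT h,
             (forall A, measurable A ->
                law_killed P mu t A
                = (law_killed P mu t setT * \int[pi]_(x in A) (h x)%:E)%E) &
             {ae pi, forall x, `|h x - 1| <= eps}]) :
  in_Pinfty Lam pi.
Proof.
have [c [C [c0 hpsi]]] := Hpsi_bd.
have [g [mg g0 gA]] := @rn_density _ _ _ Lam HLam_sfin pi Hpi_ac.
have [n Hn] := @stepA _ _ _ pi g phi mg Hphi_meas Hphi_ge0 Hphi_norm.
set S := [set x | g x <= n%:R].
have mS : measurable S.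
  have mb : measurable_fun setT (fun x => (g x <= n%:R)%R).
    exact: measurable_fun_ler mg (measurable_cst _).
  have := mb measurableT [set true] I.
  by rewrite setTI /S /preimage /=; congr measurable; apply/seteqP; split => x /=.
have S0 := @stepB_pos _ _ _ pi S mS phi Hphi_meas Hphi_ge0 Hn.
set mu := @muS _ _ _ pi S mS.
have Hinf : in_Pinfty pi mu := @muS_Pinf _ _ _ pi S mS S0.
have Hmupos : (0 < \int[mu]_x (phi x)%:E)%E := @muS_phi _ _ _ P HP pi S mS S0 phi Hphi_meas Hphi_ge0 Hn.
have [T0 HT0] := Hconv mu Hinf Hmupos (2^-1) (ltac:(by rewrite invr_gt0) : 0 < 2^-1 :> R).
have q0 : 0 <= `|T0| / t0 by rewrite divr_ge0// ltW.
set k := Num.bound (`|T0| / t0).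
set t := k%:R * t0.
have tge0 : 0 <= t by rewrite mulr_ge0// ltW.
have Tt : T0 <= t.
  apply: le_trans (ler_norm _) _.
  rewrite /t -ler_pdivrMr//; exact/ltW/archi_boundP.
have [nuT [h [mh hA hae]]] := HT0 t tge0 Tt.
have nuT1 : (law_killed P mu t setT <= 1)%E.
  rewrite /law_killed.
  have e1 : (\int[mu]_x (cst 1%E) x = 1)%E.
    by rewrite integral_cst// mul1e; exact: probability_setT.
  rewrite -e1; apply: ge0_le_integral => //.
  - exact: measurable_kernel.
  - by move=> x _; exact: sprob_kernel_le1.
set r := fine (law_killed P mu t setT).
have nuTE : law_killed P mu t setT = r%:E.
  by rewrite /r fineK// ge0_fin_numE ?(le_lt_trans nuT1) ?ltey// ltW.
have r0 : 0 < r by rewrite -lte_fin -nuTE.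
have hge x : `|h x - 1| <= 2^-1 -> 2^-1 <= h x.
  by rewrite ler_norml => /andP[hl _]; lra.
have hpiA : forall A, measurable A -> (pi A <= (2 / r)%:E * law_killed P mu t A)%E.
  move=> A mA; rewrite hA// nuTE.
  have e : (\int[pi]_(x in A) (h x)%:E = \int[pi]_(x in A) (Num.max (h x) 0)%:E)%E.
    apply: ae_eq_integral => //.
    - exact/measurable_funTS/measurable_EFinP.
    - apply/measurable_funTS/measurable_EFinP.
      exact: measurable_maxr mh (measurable_cst _).
    - apply: filterS hae => x hx Ax; congr EFin.
      by rewrite max_l// (le_trans _ (hge _ hx))// invr_ge0.
  have hh : ((2^-1)%:E * pi A <= \int[pi]_(x in A) (h x)%:E)%E.
    rewrite -(integral_cst pi mA) e.
    apply: ae_ge0_le_integral => //.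
    - by move=> x _; rewrite lee_fin invr_ge0.
    - by move=> x _; rewrite lee_fin le_max lexx orbT.
    - apply/measurable_funTS/measurable_EFinP.
      exact: measurable_maxr mh (measurable_cst _).
    - apply: filterS hae => x hx Ax /=; rewrite lee_fin le_max (hge _ hx)//.
  rewrite muleA -EFinM -mulrA mulVf ?gt_eqF// mulr1.
  apply: (@le_trans _ _ (2%:E * ((2^-1)%:E * pi A))%E).
    by rewrite muleA -EFinM divff// mul1e.
  by apply: lee_wpmul2l.
set z := fine (pi S).
have z0 : 0 < z.
  by rewrite /z fine_gt0// S0 (le_lt_trans (probability_le1 _ _)) ?ltey.
have n0 : 0 <= (n%:R : R) by [].
have hdom : forall A, measurable A ->
    (law_killed P mu t A <= (n%:R / z)%:E * \int[Lam]_x P t x A)%E.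
  move=> A mA; apply: (@dom_int _ _ _ P HP mu Lam (n%:R / z)).
  - by rewrite divr_ge0// ltW.
  - exact: (@muS_dom _ _ _ pi S mS S0 Lam g n%:R mg g0 n0 gA (fun x Sx => Sx)).
  - by [].
  - exact: measurable_kernel.
have hcl := @claim _ _ _ P HP Lam psi c C a t0 Ptilde Hpsi_meas c0 hpsi Ha (ltW Ht0) Hrev k.
have C0 : 0 <= C by have /andP[h1 h2] := hpsi x0; rewrite (le_trans (ltW c0)) ?(le_trans h1).
have D0 : 0 <= (a * C / c) ^+ k by rewrite exprn_ge0// divr_ge0 ?mulr_ge0// ltW.
apply: (@final_bound _ _ _ Lam pi g mg g0 gA (2 / r * (n%:R / z) * (a * C / c) ^+ k)).
  by rewrite mulr_ge0// mulr_ge0// divr_ge0// ltW.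
move=> A mA.
apply: le_trans (hpiA A mA) _.
apply: le_trans (lee_wpmul2l _ (hdom A mA)) _; first by rewrite lee_fin divr_ge0// ltW.
rewrite muleA -EFinM [in X in (_ <= X)%E]EFinM -muleA.
apply: lee_wpmul2l; first by rewrite lee_fin mulr_ge0// divr_ge0// ltW.
exact: hcl.
Qed.
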